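(* Let $H$ be a connected, simply connected real Lie group whose Lie algebra $\mathfrak h=(V,[\cdot,\cdot]_{\mathfrak h})$ is nilpotent of class at most $2$. Then the Lie algebra morphism $\psi: \mathfrak{aff}(\mathfrak h)\to\mathfrak{aff}(V)$, $\psi(x,D) = (x, D+\tfrac12\mathrm{ad}^{\mathfrak h}_x)$, is an algebraic morphism of algebraic Lie algebras.
   Context: A simply connected nilpotent Lie group $H$ has a unique structure of unipotent real linear algebraic group, $\mathrm{Aut}(H)\cong\mathrm{Aut}(\mathfrak h)$ is a linear algebraic group, and hence $\mathrm{Aff}(H)=H\rtimes\mathrm{Aut}(H)$ (and likewise $\mathrm{Aff}(V)=V\rtimes \mathrm{GL}(V)$ for $V$ abelian) is a real linear algebraic group; $\mathfrak{aff}(\mathfrak h)=\mathfrak h\rtimes\mathrm{Der}(\mathfrak h)$ and $\mathfrak{aff}(V)=V\rtimes\mathfrak{gl}(V)$ are their Lie algebras. An algebraic Lie algebra is the Lie algebra of a real linear algebraic group, and a morphism of algebraic Lie algebras is called algebraic if it is the differential of an algebraic morphism (a group morphism given by polynomial coordinate functions) of the corresponding linear algebraic groups. *)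

(* Defs.v *)
From HB Require Import structures.
From mathcomp Require Import all_boot all_order all_algebra.
From mathcomp Require Import all_classical all_reals all_analysis.
Set Implicit Arguments. Unset Strict Implicit. Unset Printing Implicit Defensive.
Import Order.TTheory GRing.Theory Num.Theory.
Import numFieldNormedType.Exports.
Local Open Scope ring_scope.

(* The underlying vector space V = R^n is represented by column vectors 'cV[R]_n;
   endomorphisms of V are n x n matrices acting on the left (A *m v). *)
Notation vec R n := 'cV[R]_n.
Notation mat R n := 'M[R]_n.

Section Defs.
Variables (R : realType) (n : nat).
Implicit Types (x y z : vec R n) (A B D E : mat R n).

Definition is_lie_bracket (br : vec R n -> vec R n -> vec R n) : Prop :=
  [/\ (forall a x y z, br (a *: x + y) z = a *: br x z + br y z),
      (forall a x y z, br x (a *: y + z) = a *: br x y + br x z),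
      (forall x, br x x = 0) &
      (forall x y z, br x (br y z) + br y (br z x) + br z (br x y) = 0)].

Definition nilpotent_class_le2 (br : vec R n -> vec R n -> vec R n) : Prop :=
  forall x y z, br (br x y) z = 0.

Definition ad (br : vec R n -> vec R n -> vec R n) x : mat R n :=
  \matrix_(i, j) (br x (delta_mx j 0)) i 0.

Definition is_der (br : vec R n -> vec R n -> vec R n) D : Prop :=
  forall x y, D *m br x y = br (D *m x) y + br x (D *m y).

Definition is_aut (br : vec R n -> vec R n -> vec R n) A : Prop :=
  A \in unitmx /\ forall x y, A *m br x y = br (A *m x) (A *m y).

(* The simply connected group H, in exponential coordinates (H = V as a
   manifold); for class <= 2 the BCH product is x * y = x + y + 1/2 [x,y]. *)
Definition mulH (br : vec R n -> vec R n -> vec R n) x y : vec R n := x + y + 2^-1 *: br x y.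

(* Aff(H) = H x| Aut(H), Aut(H) = Aut(h); elements are pairs (v, A),
   acting on H by w |-> v * A w. *)
Definition in_AffH (br : vec R n -> vec R n -> vec R n) (g : vec R n * mat R n) : Prop := is_aut br g.2.
Definition mulAffH (br : vec R n -> vec R n -> vec R n) (g h : vec R n * mat R n) : vec R n * mat R n :=
  (mulH br g.1 (g.2 *m h.1), g.2 *m h.2).

(* Aff(V) = V x| GL(V), acting on V by w |-> v + A w. *)
Definition in_AffV (g : vec R n * mat R n) : Prop := g.2 \in unitmx.
Definition mulAffV (g h : vec R n * mat R n) : vec R n * mat R n :=
  (g.1 + g.2 *m h.1, g.2 *m h.2).

Definition in_affh (br : vec R n -> vec R n -> vec R n) (X : vec R n * mat R n) : Prop := is_der br X.2.
Definition lie_affh (br : vec R n -> vec R n -> vec R n) (X Y : vec R n * mat R n) : vec R n * mat R n :=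
  (br X.1 Y.1 + X.2 *m Y.1 - Y.2 *m X.1, X.2 *m Y.2 - Y.2 *m X.2).
Definition lie_affV (X Y : vec R n * mat R n) : vec R n * mat R n :=
  (X.2 *m Y.1 - Y.2 *m X.1, X.2 *m Y.2 - Y.2 *m X.2).

Definition psi (br : vec R n -> vec R n -> vec R n) (X : vec R n * mat R n) : vec R n * mat R n :=
  (X.1, X.2 + 2^-1 *: ad br X.1).

Inductive polyfun : (vec R n * mat R n -> R) -> Prop :=
| pf_const c : polyfun (fun _ => c)
| pf_vcoord i : polyfun (fun g => g.1 i 0)
| pf_mcoord i j : polyfun (fun g => g.2 i j)
| pf_add f h : polyfun f -> polyfun h -> polyfun (fun g => f g + h g)
| pf_mul f h : polyfun f -> polyfun h -> polyfun (fun g => f g * h g).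

(* Phi : Aff(H) -> Aff(V) is an algebraic morphism with differential dphi:
   a group morphism Aff(H) -> Aff(V) whose coordinate functions are
   (restrictions to Aff(H) of) polynomials, and whose differential at the
   identity (0, 1) in the direction of any X in aff(h) is dphi X. *)
Definition algebraic_morphism_with_differential br
    (Phi : vec R n * mat R n -> vec R n * mat R n)
    (dphi : vec R n * mat R n -> vec R n * mat R n) : Prop :=
  [/\ (forall g, in_AffH br g -> in_AffV (Phi g)),
      (forall g h, in_AffH br g -> in_AffH br h ->
         Phi (mulAffH br g h) = mulAffV (Phi g) (Phi h)) &
      exists (Pv : 'I_n -> vec R n * mat R n -> R)
             (PM : 'I_n -> 'I_n -> vec R n * mat R n -> R),
        [/\ (forall i, polyfun (Pv i)),
            (forall i j, polyfun (PM i j)),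
            (forall g, in_AffH br g ->
               (forall i, (Phi g).1 i 0 = Pv i g) /\
               (forall i j, (Phi g).2 i j = PM i j g)),
            (forall X, in_affh br X -> forall i,
               is_derive (0 : R) (1 : R)
                 (fun t : R => Pv i (t *: X.1, 1%:M + t *: X.2))
                 ((dphi X).1 i 0)) &
            (forall X, in_affh br X -> forall i j,
               is_derive (0 : R) (1 : R)
                 (fun t : R => PM i j (t *: X.1, 1%:M + t *: X.2))
                 ((dphi X).2 i j))]].

Definition algebraic_lie_morphism br
    (dphi : vec R n * mat R n -> vec R n * mat R n) : Prop :=
  exists Phi, algebraic_morphism_with_differential br Phi dphi.

End Defs.

(* Main.v *)
Require Import Defs.
From HB Require Import structures.
From mathcomp Require Import all_boot all_order all_algebra.
From mathcomp Require Import all_classical all_reals all_analysis.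
From mathcomp Require Import ring lra.
Import Order.TTheory GRing.Theory Num.Theory.
Local Open Scope ring_scope.

Section S.
Variables (R : realType) (n : nat) (br : 'cV[R]_n -> 'cV[R]_n -> 'cV[R]_n).
Hypothesis Hl : is_lie_bracket br.
Hypothesis Hn : nilpotent_class_le2 br.

Lemma brDr x y z : br x (y + z) = br x y + br x z.
Proof. by have := Hl; rewrite /is_lie_bracket => -[] _ h _ _; rewrite -{1}[y]scale1r h !scale1r. Qed.
Lemma brDl x y z : br (x + y) z = br x z + br y z.
Proof. by have := Hl; rewrite /is_lie_bracket => -[] h _ _ _; rewrite -{1}[x]scale1r h !scale1r. Qed.
Lemma br0r x : br x 0 = 0.
Proof. by apply: (addrI (br x 0)); rewrite -brDr !addr0. Qed.
Lemma br0l x : br 0 x = 0.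
Proof. by apply: (addrI (br 0 x)); rewrite -brDl !addr0. Qed.
Lemma brZr a x y : br x (a *: y) = a *: br x y.
Proof. by have := Hl; rewrite /is_lie_bracket => -[] _ h _ _; rewrite -[a *: y]addr0 h br0r addr0. Qed.
Lemma brZl a x y : br (a *: x) y = a *: br x y.
Proof. by have := Hl; rewrite /is_lie_bracket => -[] h _ _ _; rewrite -[a *: x]addr0 h br0l addr0. Qed.
Lemma br_anti x y : br y x = - br x y.
Proof.
have := Hl; rewrite /is_lie_bracket => -[] _ _ h _; apply/eqP; rewrite -addr_eq0.
by have := h (x + y); rewrite brDl !brDr !h add0r addr0 addrC => ->.
Qed.
Lemma br_nil x y z : br x (br y z) = 0.
Proof. by rewrite br_anti Hn oppr0. Qed.

Lemma br_sumr x (r : seq 'I_n) (f : 'I_n -> R) (e : 'I_n -> 'cV[R]_n) :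
  br x (\sum_(j <- r) f j *: e j) = \sum_(j <- r) f j *: br x (e j).
Proof.
elim: r => [|j r IH]; first by rewrite !big_nil br0r.
by rewrite !big_cons brDr brZr IH.
Qed.
Lemma br_suml x (r : seq 'I_n) (f : 'I_n -> R) (e : 'I_n -> 'cV[R]_n) :
  br (\sum_(j <- r) f j *: e j) x = \sum_(j <- r) f j *: br (e j) x.
Proof.
elim: r => [|j r IH]; first by rewrite !big_nil br0l.
by rewrite !big_cons brDl brZl IH.
Qed.

Lemma vec_sum (v : 'cV[R]_n) : v = \sum_j v j 0 *: delta_mx j 0.
Proof.
rewrite {1}(matrix_sum_delta v); apply: eq_bigr => j _.
by rewrite big_ord1.
Qed.

Lemma ad_mul x v : ad br x *m v = br x v.
Proof.
rewrite {2}(vec_sum v) br_sumr; apply/matrixP => i k.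
rewrite (ord1 k) !mxE summxE; apply: eq_bigr => j _.
by rewrite !mxE mulrC.
Qed.

Lemma mx_ext (A B : 'M[R]_n) : (forall v : 'cV[R]_n, A *m v = B *m v) -> A = B.
Proof.
move=> h; apply/matrixP => i j.
have := congr1 (fun M : 'cV[R]_n => M i 0) (h (delta_mx j 0)).
by rewrite -!colE !mxE.
Qed.

Lemma adD x y : ad br (x + y) = ad br x + ad br y.
Proof. by apply: mx_ext => v; rewrite mulmxDl !ad_mul brDl. Qed.
Lemma adZ a x : ad br (a *: x) = a *: ad br x.
Proof. by apply: mx_ext => v; rewrite -scalemxAl !ad_mul brZl. Qed.
Lemma adN x : ad br (- x) = - ad br x.
Proof. by rewrite -scaleN1r adZ scaleN1r. Qed.
Lemma adB x y : ad br (x - y) = ad br x - ad br y.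
Proof. by rewrite adD adN. Qed.
Lemma ad_ad x y : ad br x *m ad br y = 0.
Proof. by apply: mx_ext => v; rewrite -mulmxA !ad_mul br_nil mul0mx. Qed.
Lemma ad_br x y : ad br (br x y) = 0.
Proof. by apply: mx_ext => v; rewrite ad_mul Hn mul0mx. Qed.
Lemma der_ad y D : is_der br D -> D *m ad br y = ad br (D *m y) + ad br y *m D.
Proof.
move=> hD; apply: mx_ext => v.
by rewrite mulmxDl -!mulmxA !ad_mul hD.
Qed.
Lemma aut_ad A u : is_aut br A -> A *m ad br u = ad br (A *m u) *m A.
Proof.
move=> [_ hA]; apply: mx_ext => v.
by rewrite -!mulmxA !ad_mul hA.
Qed.
Lemma half2 (T : 'M[R]_n) : 2^-1 *: T + 2^-1 *: T = T.
Proof. by rewrite -scalerDl (_ : 2^-1 + 2^-1 = 1 :> R) ?scale1r //; field. Qed.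

Lemma part1 X Y : in_affh br X -> in_affh br Y ->
     psi br (lie_affh br X Y) = lie_affV (psi br X) (psi br Y).
Proof.
case: X => x D; case: Y => y E; rewrite /in_affh /= => hD hE.
rewrite /psi /lie_affh /lie_affV /=; congr pair.
  rewrite !mulmxDl -!scalemxAl !ad_mul (br_anti x y) scalerN.
  move: (br x y) (D *m y) (E *m x) => w a b.
  by apply/matrixP => i j; rewrite !mxE; field.
rewrite !mulmxDl !mulmxDr -!scalemxAl -!scalemxAr !scalerA !ad_ad !scaler0 !addr0.
rewrite (der_ad y D hD) (der_ad x E hE) !adD ?adN ad_br ?scaler0 ?add0r ?scalerDr ?scalerN.
move: (D *m E) (E *m D) (ad br (D *m y)) (ad br (E *m x)) (ad br x *m E) (ad br y *m D) => P Q a b c d.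
by apply/matrixP => i j; rewrite !mxE; ring.
Qed.

Definition Phi (g : 'cV[R]_n * 'M[R]_n) : 'cV[R]_n * 'M[R]_n :=
  (g.1, (1%:M + 2^-1 *: ad br g.1) *m g.2).

Lemma Phi_unit g : in_AffH br g -> in_AffV (Phi g).
Proof.
case: g => v A; rewrite /in_AffH /in_AffV /= => -[hA _].
rewrite unitmx_mul hA andbT.
have h : (1%:M + 2^-1 *: ad br v) *m (1%:M - 2^-1 *: ad br v) = 1%:M.
  rewrite mulmxDl mulmxBr !mul1mx mulmxBr mulmx1 -!scalemxAl -scalemxAr ad_ad !scaler0.
  by rewrite subr0 addrNK.
by case: (mulmx1_unit h).
Qed.

Lemma Phi_mul g h : in_AffH br g -> in_AffH br h ->
  Phi (mulAffH br g h) = mulAffV (Phi g) (Phi h).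
Proof.
case: g => v A; case: h => u B; rewrite /in_AffH /= => hA _.
rewrite /Phi /mulAffH /mulAffV /mulH /=; congr pair.
  by rewrite -mulmxA mulmxDl mul1mx -scalemxAl ad_mul addrA.
rewrite !adD adZ ad_br scaler0 addr0.
rewrite !mulmxA -[_ *m A *m _]mulmxA mulmxDr mulmx1 -scalemxAr.
rewrite -(mulmxA _ A) (aut_ad A u hA) mulmxA; congr (_ *m B).
rewrite mulmxA scalemxAl -mulmxDl; congr (_ *m A).
by rewrite mulmxDl mul1mx -!scalemxAl ad_ad !scaler0 addr0 scalerDr addrA.
Qed.

Lemma polyfun_sum (I : Type) (r : seq I) (F : I -> 'cV[R]_n * 'M[R]_n -> R) :
  (forall k, polyfun (F k)) -> polyfun (fun g => \sum_(k <- r) F k g).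
Proof.
move=> hF; elim: r => [|a r IH].
  have -> : (fun g => \sum_(k <- [::]) F k g) = (fun _ => 0).
    by apply: boolp.funext => g; rewrite big_nil.
  exact: pf_const.
have -> : (fun g => \sum_(k <- a :: r) F k g) = (fun g => F a g + \sum_(k <- r) F k g).
  by apply: boolp.funext => g; rewrite big_cons.
exact: pf_add.
Qed.

Definition PM (i j : 'I_n) (g : 'cV[R]_n * 'M[R]_n) : R :=
  \sum_(k < n) (((i == k)%:R + 2^-1 * \sum_(l < n) g.1 l 0 *
      (br (delta_mx l 0) (delta_mx k 0)) i 0) * g.2 k j).

Lemma PM_poly i j : polyfun (PM i j).
Proof.
apply: polyfun_sum => k; apply: pf_mul; last exact: pf_mcoord.
apply: pf_add; first exact: pf_const.
apply: pf_mul; first exact: pf_const.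
apply: polyfun_sum => l; apply: pf_mul; [exact: pf_vcoord | exact: pf_const].
Qed.

Lemma PM_eq i j g : (Phi g).2 i j = PM i j g.
Proof.
rewrite /Phi /PM /= !mxE; apply: eq_bigr => k _; rewrite !mxE.
rewrite {1}(vec_sum g.1) br_suml summxE. congr (((_ : R) + _ * _) * _). apply: eq_bigr => l _; rewrite !mxE. done.
Qed.

Lemma deriv_quad (a b c : R) : is_derive (0:R) (1:R) (fun t : R => a + t * (b + t * c)) b.
Proof.
have h : is_derive (0:R) (1:R) (cst a + id * (cst b + id * cst c)) b.
  apply: is_derive_eq.
  rewrite /= !scale0r !add0r !fctE mul0r addr0 /cst. exact: mulr1.
exact: h.
Qed.

Lemma Phi_deriv (x : 'cV[R]_n) (D : 'M[R]_n) i j :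
  is_derive (0:R) (1:R) (fun t : R => PM i j (t *: x, 1%:M + t *: D))
    ((D + 2^-1 *: ad br x) i j).
Proof.
have -> : (fun t : R => PM i j (t *: x, 1%:M + t *: D)) =
  (fun t => (1%:M : 'M[R]_n) i j + t * ((D + 2^-1 *: ad br x) i j +
                t * (2^-1 * (ad br x *m D) i j))).
  apply: boolp.funext => t; rewrite -PM_eq /Phi /= adZ.
  rewrite mulmxDl !mulmxDr !mul1mx mulmx1 -!scalemxAl -!scalemxAr.
  move: (ad br x *m D) (ad br x) => M N.
  rewrite !mxE; ring.
exact: deriv_quad.
Qed.
End S.

Theorem lemma4 (R : realType) (n : nat)
    (br : 'cV[R]_n -> 'cV[R]_n -> 'cV[R]_n) :
  is_lie_bracket br -> nilpotent_class_le2 br ->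
  (forall X Y, in_affh br X -> in_affh br Y ->
     psi br (lie_affh br X Y) = lie_affV (psi br X) (psi br Y)) /\
  algebraic_lie_morphism br (psi br).
Proof.
move=> Hl Hn; split; first exact: part1.
exists (Phi _ _ br); split.
- exact: Phi_unit.
- exact: Phi_mul.
exists (fun i (g : 'cV[R]_n * 'M[R]_n) => g.1 i 0), (PM _ _ br); split.
- by move=> i; exact: pf_vcoord.
- exact: PM_poly.
- by move=> g _; split => // i j; rewrite PM_eq.
- move=> [x D] _ i /=.
  have -> : (fun t : R => (t *: x) i 0) = (fun t => 0 + t * (x i 0 + t * 0)).
    by apply: boolp.funext => t; rewrite mxE mulr0 addr0 add0r.
  exact: deriv_quad.
- by move=> [x D] _ i j /=; exact: Phi_deriv.
Qed.
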